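(* Under the hypotheses and notation of the following setting: $Q(z)=\Gamma_0^+(A-z)^{-1}\Gamma_0\in N_\kappa(H)$ with $A$ a bounded self-adjoint operator in a Pontryagin space $K$, $\Gamma_0:H\to K$ bounded, $\Gamma_0^+\Gamma_0$ boundedly invertible, $P:=\Gamma_0(\Gamma_0^+\Gamma_0)^{-1}\Gamma_0^+$, $\tilde A:=(I-P)A(I-P)$ acting in $(I-P)K$, and $\hat Q(z):=-Q(z)^{-1}$, it holds for every $z\in\rho(A)\cap\rho(\tilde A)$ that $$\hat Q(z)\Gamma_0^+=(\Gamma_0^+\Gamma_0)^{-1}\Gamma_0^+\Big\{-I+A(I-P)(\tilde A-z)^{-1}(I-P)\Big\}(A-z).$$
   Context: $H$ is a Hilbert space; $(K,[\cdot,\cdot])$ a Pontryagin space; for bounded $\Gamma_0:H\to K$, $\Gamma_0^+$ is defined by $(h,\Gamma_0^+k)=[\Gamma_0h,k]$. $N_\kappa(H)$ denotes generalized Nevanlinna functions with $\kappa$ negative squares. $(I-P)(\tilde A-z)^{-1}(I-P)$ denotes the operator on $K$ equal to $(\tilde A-z)^{-1}$ on $(I-P)K$ and $0$ on $PK$; $P$ is an orthogonal projection in $K$ with $PK=\Gamma_0(H)$ and $(I-P)K=\ker\Gamma_0^+$. *)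

(* Defs.v *)
From HB Require Import structures.
From mathcomp Require Import all_boot all_order all_algebra.
Set Implicit Arguments. Unset Strict Implicit. Unset Printing Implicit Defensive.
Import Order.TTheory GRing.Theory Num.Theory.
Local Open Scope ring_scope.

Section Defs.
Variable C : numClosedFieldType.

Definition sesquilinear (V : lmodType C) (f : V -> V -> C) :=
  (forall a x1 x2 y, f (a *: x1 + x2) y = a * f x1 y + f x2 y) /\
  (forall x y, f y x = (f x y)^*).

Definition inner_product (V : lmodType C) (f : V -> V -> C) :=
  sesquilinear f /\ (forall x, x != 0 -> 0 < f x x).

Definition nondegenerate (V : lmodType C) (f : V -> V -> C) :=
  forall x, (forall y, f x y = 0) -> x = 0.

(* the span of the family v is a (dim n) negative definite subspace *)
Definition neg_definite_family (V : lmodType C) (f : V -> V -> C)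
  (n : nat) (v : 'I_n -> V) :=
  forall c : 'I_n -> C, (exists i, c i != 0) ->
    f (\sum_i c i *: v i) (\sum_i c i *: v i) < 0.

Definition neg_index (V : lmodType C) (f : V -> V -> C) (kappa : nat) :=
  (exists v : 'I_kappa -> V, neg_definite_family f v) /\
  (forall n (v : 'I_n -> V), neg_definite_family f v -> (n <= kappa)%N).

(* indefinite inner product of a Pontryagin space with kappa negative squares
   (algebraic part; completeness not expressible here) *)
Definition pontryagin_form (V : lmodType C) (f : V -> V -> C) (kappa : nat) :=
  sesquilinear f /\ nondegenerate f /\ neg_index f kappa.

Definition is_adjoint (H K : lmodType C) (ipH : H -> H -> C) (ipK : K -> K -> C)
  (G : H -> K) (Gp : K -> H) :=
  forall h k, ipH h (Gp k) = ipK (G h) k.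

Definition self_adjoint (K : lmodType C) (ipK : K -> K -> C) (A : K -> K) :=
  forall x y, ipK (A x) y = ipK x (A y).

(* P := Gamma0 (Gamma0^+ Gamma0)^{-1} Gamma0^+ , Ginv = (Gamma0^+ Gamma0)^{-1} *)
Definition projP (H K : lmodType C) (G0 : H -> K) (Ginv : H -> H) (G0p : K -> H)
  : K -> K := fun k => G0 (Ginv (G0p k)).

Definition compress (K : lmodType C) (P : K -> K) (A : K -> K) : K -> K :=
  fun k => A (k - P k) - P (A (k - P k)).

(* (I-P)(Atilde - z)^{-1}(I-P), given RT = (Atilde - z)^{-1} on (I-P)K *)
Definition compressed_resolvent (K : lmodType C) (P : K -> K) (RT : K -> K)
  : K -> K := fun k => RT (k - P k) - P (RT (k - P k)).

(* Q(z) = Gamma0^+ (A - z)^{-1} Gamma0, given RA = (A - z)^{-1} *)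
Definition Qz (H K : lmodType C) (G0 : H -> K) (G0p : K -> H) (RA : K -> K)
  : H -> H := fun h => G0p (RA (G0 h)).

End Defs.

(* Main.v *)
Require Import Defs.
From HB Require Import structures.
From mathcomp Require Import all_boot all_order all_algebra.
Import Order.TTheory GRing.Theory Num.Theory.
Local Open Scope ring_scope.

Theorem corollary1 (C : numClosedFieldType) (H K : lmodType C)
  (ipH : H -> H -> C) (ipK : K -> K -> C) (kappa : nat)
  (G0 : {linear H -> K}) (G0p : {linear K -> H}) (A : {linear K -> K})
  (Ginv : H -> H) (z : C) (RA : K -> K) (RT : K -> K) :
  inner_product ipH ->
  pontryagin_form ipK kappa ->
  is_adjoint ipH ipK G0 G0p ->
  self_adjoint ipK A ->
  (* Gamma0^+ Gamma0 is invertible with inverse Ginv *)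
  cancel (fun h => G0p (G0 h)) Ginv -> cancel Ginv (fun h => G0p (G0 h)) ->
  (* z in rho(A), RA = (A - z)^{-1} *)
  cancel (fun k => A k - z *: k) RA -> cancel RA (fun k => A k - z *: k) ->
  (* z in rho(Atilde): RT is the inverse of Atilde - z on (I-P)K = {x | P x = 0} *)
  (forall x, projP G0 Ginv G0p x = 0 ->
     [/\ projP G0 Ginv G0p (RT x) = 0,
         RT (compress (projP G0 Ginv G0p) A x - z *: x) = x &
         compress (projP G0 Ginv G0p) A (RT x) - z *: RT x = x]) ->
  (* Q(z) is invertible, and Qhat(z) := - Q(z)^{-1} satisfies the formula *)
  exists Qinv : H -> H,
    [/\ cancel (Qz G0 G0p RA) Qinv, cancel Qinv (Qz G0 G0p RA) &
        forall k : K,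
          - Qinv (G0p k) =
          Ginv (G0p (- (A k - z *: k)
                     + A (compressed_resolvent (projP G0 Ginv G0p) RT (A k - z *: k))))].
Proof.
move=> _ _ _ _ BK KB RK KR HT.
set P := projP G0 Ginv G0p in HT *.
have GinvB : forall x y, Ginv (x - y) = Ginv x - Ginv y.
  move=> x y; rewrite -{1}(KB x) -{1}(KB y).
  rewrite -(linearB G0p) -(linearB G0).
  exact: (BK (Ginv x - Ginv y)).
have Ginv0 : Ginv 0 = 0 by have := GinvB 0 0; rewrite !subrr.
have PB : forall x y, P (x - y) = P x - P y.
  by move=> x y; rewrite /P /projP linearB /= GinvB linearB.
have P0 : P 0 = 0 by have := PB 0 0; rewrite !subrr.
have PN : forall x, P (- x) = - P x by move=> x; rewrite -sub0r PB P0 sub0r.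
have PD : forall x y, P (x + y) = P x + P y.
  by move=> x y; have := PB x (- y); rewrite !opprK PN opprK.
have G0pP : forall x, G0p (P x) = G0p x by move=> x; rewrite /P /projP KB.
have PG0 : forall h, P (G0 h) = G0 h by move=> h; rewrite /P /projP BK.
have PP : forall x, P (P x) = P x by move=> x; rewrite {1}/P /projP G0pP.
have Pc : forall x, P (x - P x) = 0 by move=> x; rewrite PB PP subrr.
set F := fun k => Ginv (G0p (- (A k - z *: k)
                     + A (compressed_resolvent P RT (A k - z *: k)))).
have key : forall k, Qz G0 G0p RA (F k) = - G0p k.
  move=> k; rewrite /Qz /F.
  set w := A k - z *: k.
  have [Pu RTu Eu] := HT _ (Pc w).
  have -> : compressed_resolvent P RT w = RT (w - P w) by rewrite /compressed_resolvent Pu subr0.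
  set u := RT (w - P w) in Pu Eu *.
  move: Eu; rewrite /compress Pu subr0 => Eu.
  have -> : G0 (Ginv (G0p (- w + A u))) = P (- w + A u) by [].
  rewrite PD PN.
  have E' : A u - z *: u = w - P w + P (A u).
    by rewrite -Eu addrAC subrK.
  have -> : - P w + P (A u) = A (u - k) - z *: (u - k).
    have -> : A (u - k) - z *: (u - k) = (A u - z *: u) - w.
      rewrite linearB /= scalerBr /w !opprB addrACA [in RHS]addrACA.
      by rewrite [- A k + _]addrC.
    by rewrite E' addrAC [w - P w - w]addrAC subrr add0r.
  rewrite RK linearB /= -[G0p u]G0pP Pu linear0 sub0r.
  done.
have inj : forall a b, Qz G0 G0p RA a = Qz G0 G0p RA b -> a = b.
  move=> a b; rewrite /Qz => Eab.
  set v := RA (G0 a) - RA (G0 b).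
  have G0pv : G0p v = 0 by rewrite linearB /= Eab subrr.
  have Pv : P v = 0 by rewrite /P /projP G0pv Ginv0 linear0.
  have Av : A v - z *: v = G0 (a - b).
    rewrite linearB /= scalerBr opprB linearB /= -[in RHS](KR (G0 a)) -[in RHS](KR (G0 b)).
    by rewrite opprB addrACA [RHS]addrACA [- _ - _]addrC.
  have Pz : P (z *: v) = 0 by rewrite /P /projP linearZ /= G0pv scaler0 Ginv0 linear0.
  have cv : compress P A v - z *: v = 0.
    rewrite /compress Pv subr0 addrAC Av.
    by rewrite -(subrK (z *: v) (A v)) PD Pz addr0 Av PG0 subrr.
  have Rv : RT 0 = v by have [_ h _] := HT v Pv; rewrite cv in h.
  have R0 : RT 0 = 0.
    have [_ h _] := HT 0 P0; move: h.
    by rewrite /compress P0 subr0 linear0 P0 subr0 scaler0 subr0.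
  have G0ab : G0 (a - b) = 0 by rewrite -Av -Rv R0 linear0 scaler0 subr0.
  apply/eqP; rewrite -subr_eq0; apply/eqP.
  by rewrite -(BK (a - b)) G0ab linear0 Ginv0.
have RAN : forall x, RA (- x) = - RA x.
  move=> x.
  have e : - x = A (- RA x) - z *: (- RA x).
    by rewrite linearN /= scalerN opprK -{1}(KR x) opprB addrC.
  by rewrite e RK.
have QN : forall x, Qz G0 G0p RA (- x) = - Qz G0 G0p RA x.
  by move=> x; rewrite /Qz linearN /= RAN linearN.
have QK : forall h, Qz G0 G0p RA (- F (G0 (Ginv h))) = h.
  by move=> h; rewrite QN key opprK KB.
exists (fun h => - F (G0 (Ginv h))); split.
- by move=> h; apply: inj; rewrite QK.
- exact: QK.
move=> k; rewrite opprK; apply: inj; rewrite !key.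
by rewrite -[G0 (Ginv (G0p k))]/(P k) G0pP.
Qed.
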